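(* Let $i\colon A\hookrightarrow X$ be an embedding and $f\colon A\to B$ a morphism in $\mathbf{MetCH_{sep}}$, and let $\iota_B\colon B\to B+X$, $\iota_X\colon X\to B+X$ be the coproduct injections. Define $\gamma\colon (B+X)\times(B+X)\to[0,\infty]$ by: (1) for $b,b'\in B$: $\gamma(\iota_B(b),\iota_B(b'))=d_B(b,b')$; (2) for $x,x'\in X$: $\gamma(\iota_X(x),\iota_X(x'))=\min\big\{d_X(x,x'),\ \inf_{a,a'\in A}\big(d_X(x,i(a))+d_B(f(a),f(a'))+d_X(i(a'),x')\big)\big\}$; (3) for $b\in B$, $x\in X$: $\gamma(\iota_B(b),\iota_X(x))=\inf_{a\in A}\big(d_B(b,f(a))+d_X(i(a),x)\big)$ and $\gamma(\iota_X(x),\iota_B(b))=\inf_{a\in A}\big(d_X(x,i(a))+d_B(f(a),b)\big)$. Then $\gamma$ is a continuous submetric on $B+X$. Moreover, the quotient $(B+X)/{\sim_\gamma}$, together with the maps $B\to(B+X)/{\sim_\gamma}$ and $X\to(B+X)/{\sim_\gamma}$ obtained by composing $\iota_B$ and $\iota_X$ with the projection, is the pushout of $B\xleftarrow{f}A\xrightarrow{i}X$ in $\mathbf{MetCH_{sep}}$.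
   Context: A metric on a set $X$ is a map $d\colon X\times X\to[0,\infty]$ with $d(x,x)=0$ and $d(x,z)\le d(x,y)+d(y,z)$ (not necessarily symmetric, $\infty$ allowed); separated means $d(x,y)=0=d(y,x)$ implies $x=y$. The upper topology on $[0,\infty]$ has as nonempty proper open sets the sets $]u,\infty]$. A separated metric compact Hausdorff space is a compact Hausdorff space with a separated metric continuous as a map $X\times X\to[0,\infty]$ with the upper topology. $\mathbf{MetCH_{sep}}$: these spaces with continuous non-expansive maps ($d_Y(f(x),f(y))\le d_X(x,y)$). An embedding is an injective morphism $f$ with $d_X(x,y)=d_Y(f(x),f(y))$. The coproduct $B+X$ is the disjoint union with coproduct topology and the metric agreeing with $d_B$, $d_X$ on the summands and equal to $\infty$ between points of different summands. A continuous submetric on a separated metric compact Hausdorff space $(Z,d)$ is a (not necessarily separated) metric $\gamma$ on $Z$, continuous $Z\times Z\to[0,\infty]$ for the upper topology, with $\gamma\le d$ pointwise. For such $\gamma$, $\sim_\gamma$ is the equivalence relation $z\sim_\gamma w\iff\gamma(z,w)=\gamma(w,z)=0$, and $Z/{\sim_\gamma}$ is the quotient set with the quotient topology and metric $([z],[w])\mapsto\gamma(z,w)$; the projection $Z\to Z/{\sim_\gamma}$ is a surjective morphism of $\mathbf{MetCH_{sep}}$. *)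

(* Defs.v *)
From HB Require Import structures.
From mathcomp Require Import all_boot all_order all_algebra.
From mathcomp Require Import generic_quotient.
From mathcomp Require Import all_classical all_reals all_analysis.

Set Implicit Arguments.
Unset Strict Implicit.
Unset Printing Implicit Defensive.

Import Order.TTheory GRing.Theory Num.Theory.
Local Open Scope classical_set_scope.
Local Open Scope ring_scope.
Local Open Scope ereal_scope.
Local Open Scope quotient_scope.

Section MetCH.
Context {R : realType}.

(* A (not necessarily symmetric) metric with values in [0, +oo]. *)
Definition is_metric {T : Type} (d : T -> T -> \bar R) : Prop :=
  [/\ forall x y, 0 <= d x y,
      forall x, d x x = 0 &
      forall x y z, d x z <= d x y + d y z].

Definition is_separated {T : Type} (d : T -> T -> \bar R) : Prop :=
  forall x y, d x y = 0 -> d y x = 0 -> x = y.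

(* continuity of d : T x T -> [0,oo] for the upper topology on [0,oo]:
   preimages of the sets ]u, oo] are open *)
Definition upper_continuous {T : topologicalType} (d : T -> T -> \bar R) : Prop :=
  forall u : \bar R, open [set p : T * T | u < d p.1 p.2].

Definition MetCH_sep {T : topologicalType} (d : T -> T -> \bar R) : Prop :=
  [/\ compact [set: T], hausdorff_space T, is_metric d, is_separated d &
      upper_continuous d].

Definition is_morphism {S T : topologicalType} (dS : S -> S -> \bar R)
  (dT : T -> T -> \bar R) (g : S -> T) : Prop :=
  continuous g /\ forall x y, dT (g x) (g y) <= dS x y.

Definition is_embedding {S T : topologicalType} (dS : S -> S -> \bar R)
  (dT : T -> T -> \bar R) (g : S -> T) : Prop :=
  [/\ injective g, is_morphism dS dT g & forall x y, dT (g x) (g y) = dS x y].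

Definition is_submetric {Z : topologicalType} (d gamma : Z -> Z -> \bar R) : Prop :=
  [/\ is_metric gamma, upper_continuous gamma & forall z w, gamma z w <= d z w].

Definition is_pushout {A B X P : topologicalType}
  (dA : A -> A -> \bar R) (dB : B -> B -> \bar R) (dX : X -> X -> \bar R)
  (dP : P -> P -> \bar R) (f : A -> B) (i : A -> X) (jB : B -> P) (jX : X -> P)
  : Prop :=
  [/\ MetCH_sep dP, is_morphism dB dP jB, is_morphism dX dP jX,
      jB \o f = jX \o i &
      forall (Z : topologicalType) (dZ : Z -> Z -> \bar R), MetCH_sep dZ ->
      forall (g : B -> Z) (h : X -> Z),
        is_morphism dB dZ g -> is_morphism dX dZ h -> g \o f = h \o i ->
        exists! u : P -> Z, [/\ is_morphism dP dZ u, u \o jB = g & u \o jX = h]].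

End MetCH.

Definition sumT (B X : Type) : Type := (B + X)%type.

Section SumTopology.
Context {B X : topologicalType}.

HB.instance Definition _ := Choice.copy (sumT B X) (B + X)%type.

Definition sum_open (U : set (sumT B X)) : Prop :=
  open (@inl B X @^-1` U) /\ open (@inr B X @^-1` U).

Lemma sum_openT : sum_open setT.
Proof. by split; rewrite preimage_setT; exact: openT. Qed.

Lemma sum_openI : setI_closed sum_open.
Proof.
move=> U V [U1 U2] [V1 V2]; split; rewrite preimage_setI; exact: openI.
Qed.

Lemma sum_open_bigU (I : Type) (F : I -> set (sumT B X)) :
  (forall k, sum_open (F k)) -> sum_open (\bigcup_k F k).
Proof.
move=> oF; split; rewrite preimage_bigcup; apply: bigcup_open => k _;
  by case: (oF k).
Qed.

HB.instance Definition _ :=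
  isOpenTopological.Build (sumT B X) sum_openT sum_openI sum_open_bigU.

End SumTopology.

Section Gluing.
Context {R : realType}.
Local Open Scope ereal_scope.
Local Open Scope quotient_scope.

Definition sum_dist {B X : Type} (dB : B -> B -> \bar R) (dX : X -> X -> \bar R)
  (z w : sumT B X) : \bar R :=
  match z, w with
  | inl b, inl b' => dB b b'
  | inr x, inr x' => dX x x'
  | _, _ => +oo
  end.

Definition glue_dist {A B X : Type} (dB : B -> B -> \bar R) (dX : X -> X -> \bar R)
  (i : A -> X) (f : A -> B) (z w : sumT B X) : \bar R :=
  match z, w with
  | inl b, inl b' => dB b b'
  | inr x, inr x' =>
      Order.min (dX x x')
        (ereal_inf (range (fun p : A * A =>
           dX x (i p.1) + dB (f p.1) (f p.2) + dX (i p.2) x')))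
  | inl b, inr x => ereal_inf (range (fun a : A => dB b (f a) + dX (i a) x))
  | inr x, inl b => ereal_inf (range (fun a : A => dX x (i a) + dB (f a) b))
  end.

Section Quot.
Context {Z : topologicalType} (gamma : Z -> Z -> \bar R) (H : is_metric gamma).

Definition gamma_rel : rel Z :=
  fun z w => `[< gamma z w = 0 /\ gamma w z = 0 >].

Lemma gamma_rel_refl : reflexive gamma_rel.
Proof. by move=> z; apply/asboolP; case: H => _ h0 _; rewrite h0. Qed.

Lemma gamma_rel_sym : symmetric gamma_rel.
Proof.
by move=> z w; apply/asboolP/asboolP => -[h1 h2].
Qed.

Lemma gamma_rel_trans : transitive gamma_rel.
Proof.
case: H => hpos _ htri y x z /asboolP [h1 h2] /asboolP [h3 h4].
apply/asboolP; split; apply/eqP; rewrite eq_le hpos andbT.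
- by have := htri x y z; rewrite h1 h3 adde0.
- by have := htri z y x; rewrite h4 h2 adde0.
Qed.

Definition gamma_equiv : equiv_rel Z :=
  EquivRel gamma_rel gamma_rel_refl gamma_rel_sym gamma_rel_trans.

Definition gquot : topologicalType :=
  quotient_topology {eq_quot gamma_equiv}.

Definition gquot_dist (q q' : gquot) : \bar R := gamma (repr q) (repr q').

Definition gquot_proj : Z -> gquot := \pi_gquot.

End Quot.
End Gluing.

Arguments gquot {R Z gamma} H.
Arguments gquot_dist {R Z gamma} H q q'.
Arguments gquot_proj {R Z gamma} H z.

(* Main.v *)
Require Import Defs.
From HB Require Import structures.
From mathcomp Require Import all_boot all_order all_algebra.
From mathcomp Require Import generic_quotient.
From mathcomp Require Import all_classical all_reals all_analysis.
From mathcomp Require Import lra.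

Set Implicit Arguments.
Unset Strict Implicit.
Unset Printing Implicit Defensive.
Import Order.TTheory GRing.Theory Num.Theory.
Local Open Scope classical_set_scope.
Local Open Scope ring_scope.
Local Open Scope ereal_scope.


Section Gen.
Context {R : realType}.

Definition lscN {T : topologicalType} (g : T -> \bar R) :=
  forall x u, u < g x -> \forall y \near x, u < g y.

Lemma open_lscN {T : topologicalType} (g : T -> \bar R) :
  (forall u, open [set x | u < g x]) <-> lscN g.
Proof.
split.
- move=> og x u ux; apply: open_nbhs_nbhs; split => //; exact: og.
- by move=> lg u; rewrite openE => x /= ux; exact: lg.
Qed.

Lemma uc_lscN {T : topologicalType} (d : T -> T -> \bar R) :
  upper_continuous d <-> lscN (fun p : T * T => d p.1 p.2).
Proof. exact: (open_lscN (fun p : T * T => d p.1 p.2)). Qed.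

Lemma nbhs_box {Y K : topologicalType} (y : Y) (k : K) (S : set (Y * K)) :
  nbhs (y, k) S <-> exists U V, [/\ nbhs y U, nbhs k V & U `*` V `<=` S].
Proof.
split.
- by case=> -[U V] /= [nU nV] sub; exists U, V.
- by case=> U [V [nU nV sub]]; exists (U, V).
Qed.

Lemma tube {Y K : topologicalType} (P : Y -> K -> Prop) (y : Y) :
  compact [set: K] ->
  (forall k : K, nbhs (y, k) (fun p => P p.1 p.2)) ->
  (\forall y' \near y, forall k, P y' k).
Proof.
move=> /compact_near_coveringP cK hk.
have : \forall i \near y, [set: K] `<=` P i.
  apply: (cK Y (nbhs y) (fun i k => P i k)) => // k _.
  have /nbhs_box [U [V [nU nV sub]]] := hk k.
  exists (V, U) => //= -[k' y'] /= [Vk Uy]; exact: (sub (y', k')).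
by apply: filterS => z h k; exact: h.
Qed.

Lemma proj_closed {Y K : topologicalType} (C : set (Y * K)) :
  compact [set: K] -> closed C -> closed [set y | exists k, C (y, k)].
Proof.
move=> cK cC; rewrite -[X in closed X]setCK closedC openE => y /= ny.
have : \forall y' \near y, forall k, ~ C (y', k).
  apply: tube => // k.
  have oC : open (~` C) by exact: closed_openC.
  have : nbhs (y, k) (~` C).
    by apply: open_nbhs_nbhs; split => // Cyk; apply: ny; exists k.
  by apply: filterS => -[a b].
by apply: filterS => z h [k Ck]; exact: (h k).
Qed.

Lemma ereal_dense (a b : \bar R) : a < b -> exists2 r, a < r & r < b.
Proof.
case: a => [x| |]; case: b => [y| |] //=; rewrite ?lte_fin => h.
- by exists ((x + y) / 2)%:E; rewrite lte_fin; have [] := midf_lt h.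
- by exists (x + 1)%:E; rewrite ?lte_fin ?ltey // ltrDl.
- by exists (y - 1)%:E; rewrite ?lte_fin ?ltNye // ltrBlDr ltrDl.
- by exists 0%:E; rewrite ?ltey ?ltNye.
Qed.

Lemma split_sum (a b u : \bar R) : 0 <= a -> 0 <= b -> u < a + b ->
  exists u1 u2 : R, [/\ u1%:E < a, u2%:E < b & u <= (u1 + u2)%:E].
Proof.
case: u => [r| |] ha hb; first last.
- move=> _; exists (-1)%R, (-1)%R; split; rewrite ?leNye //.
    by apply: (lt_le_trans _ ha); rewrite lte_fin; lra.
  by apply: (lt_le_trans _ hb); rewrite lte_fin; lra.
- move=> h. have := leey (a + b). by rewrite leNgt h.
move: ha hb; case: a => [x| |]; case: b => [y| |] //=; rewrite ?lee_fin => ha hb.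
- rewrite -EFinD lte_fin => h.
  exists (x - (x + y - r) / 2)%R, (y - (x + y - r) / 2)%R; rewrite !lte_fin lee_fin; split; lra.
- move=> _; exists (-1)%R, (r + 1)%R; rewrite ?lte_fin lee_fin ?ltey; split => //; lra.
- move=> _; exists (r + 1)%R, (-1)%R; rewrite ?lte_fin lee_fin ?ltey; split => //; lra.
- move=> _; exists (r + 1)%R, (-1)%R; rewrite ?lte_fin lee_fin ?ltey; split => //; lra.
Qed.

Lemma lscN_add {T : topologicalType} (g1 g2 : T -> \bar R) :
  (forall x, 0 <= g1 x) -> (forall x, 0 <= g2 x) -> lscN g1 -> lscN g2 ->
  lscN (fun x => g1 x + g2 x).
Proof.
move=> p1 p2 l1 l2 x u h.
have [u1 [u2 [h1 h2 h3]]] := split_sum (p1 x) (p2 x) h.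
near=> y; apply: (le_lt_trans h3); rewrite EFinD; apply: lteD; near: y.
  exact: l1.
exact: l2.
Unshelve. all: by end_near. Qed.

Lemma lscN_min {T : topologicalType} (g1 g2 : T -> \bar R) :
  lscN g1 -> lscN g2 -> lscN (fun x => Order.min (g1 x) (g2 x)).
Proof.
move=> l1 l2 x u; rewrite lt_min => /andP[h1 h2].
near=> y; rewrite lt_min; apply/andP; split; near: y.
  exact: l1.
exact: l2.
Unshelve. all: by end_near. Qed.

Lemma lscN_comp2 {T Y : topologicalType} (d : T -> T -> \bar R) (p q : Y -> T) :
  lscN (fun z : T * T => d z.1 z.2) -> continuous p -> continuous q ->
  lscN (fun y => d (p y) (q y)).
Proof.
move=> ld cp cq x u h.
have /nbhs_box [U [V [nU nV sub]]] := ld (p x, q x) u h.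
near=> y; apply: (sub (p y, q y)); split; near: y.
  exact: (cp x U nU).
exact: (cq x V nV).
Unshelve. all: by end_near. Qed.

Lemma lscN_comp {T Y : topologicalType} (g : T -> \bar R) (p : Y -> T) :
  lscN g -> continuous p -> lscN (g \o p).
Proof.
move=> lg cp x u h; exact: (cp x _ (lg _ _ h)).
Qed.

Lemma lscN_inf {Y K : topologicalType} (F : Y -> K -> \bar R) :
  compact [set: K] -> lscN (fun p : Y * K => F p.1 p.2) ->
  lscN (fun y => ereal_inf (range (F y))).
Proof.
move=> cK lF y u uy.
have [r ur ry] : exists2 r, u < r & r < ereal_inf (range (F y)).
  exact: ereal_dense.
have : \forall y' \near y, forall k, r < F y' k.
  apply: tube => // k; apply: (lF (y, k)) => /=.
  by apply: (lt_le_trans ry); apply: ereal_inf_lbound; exists k.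
apply: filterS => z h; apply: (lt_le_trans ur).
by apply/ereal_infP => _ [k _ <-]; apply: ltW; exact: h.
Qed.

End Gen.


Lemma snd_cont {Y K : topologicalType} : continuous (@snd Y K).
Proof. by move=> [a b]; exact: cvg_snd. Qed.
Lemma fst_cont {Y K : topologicalType} : continuous (@fst Y K).
Proof. by move=> [a b]; exact: cvg_fst. Qed.

Lemma closed_snd {Y K : topologicalType} (D : set K) :
  closed D -> closed [set p : Y * K | D p.2].
Proof. by move=> cD; apply: (@preimage_closed _ _ snd) => // x _; exact: snd_cont. Qed.

Lemma closed_fst {Y K : topologicalType} (D : set Y) :
  closed D -> closed [set p : Y * K | D p.1].
Proof. by move=> cD; apply: (@preimage_closed _ _ fst) => // x _; exact: fst_cont. Qed.

Lemma closed_swap {Y K : topologicalType} (D : set (Y * K)) :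
  closed D -> closed [set p : K * Y | D (p.2, p.1)].
Proof.
move=> cD; apply: (@preimage_closed _ _ unstable.swap) => // x _.
exact: swap_continuous.
Qed.

Section Key.
Context {Z : topologicalType} (E : Z -> Z -> Prop).
Hypotheses (cZ : compact [set: Z]) (hZ : hausdorff_space Z)
  (Er : forall s, E s s) (Es : forall s t, E s t -> E t s)
  (Et : forall s t r, E s t -> E t r -> E s r)
  (cE : closed [set p : Z * Z | E p.1 p.2]).

Lemma sat_closed (D : set Z) : closed D ->
  closed [set s | exists t, E s t /\ D t].
Proof.
move=> cD.
have := @proj_closed Z Z [set p | E p.1 p.2 /\ D p.2] cZ.
apply; apply: closedI => //; exact: closed_snd.
Qed.

Lemma class_closed (w : Z) : closed [set t | E t w].
Proof.
have h1 : compact [set w] by exact: compact_set1.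
have := @sat_closed [set w] (compact_closed hZ h1).
congr closed; apply/funext => t; apply/propext; split.
  by case=> t' [? Hw]; rewrite -Hw.
by move=> h; exists w.
Qed.

Lemma key (F : set (Z * Z)) z w : closed F ->
  (forall s s' t t', E s s' -> E t t' -> F (s, t) -> F (s', t')) -> ~ F (z, w) ->
  exists U V, [/\ open U, open V, U z & V w] /\
   [/\ (forall s s', E s s' -> U s -> U s'), (forall t t', E t t' -> V t -> V t')
     & (forall s t, U s -> V t -> ~ F (s, t))].
Proof.
move=> cF sF nF.
pose P1 := [set s | exists t, E t w /\ F (s, t)].
have cP1 : closed P1.
  have := @proj_closed Z Z [set p | E p.2 w /\ F p] cZ; apply.
  apply: (@closedI _ [set p : Z * Z | E p.2 w] F) => //.
  exact: (@closed_snd Z Z _ (class_closed (w:=w))).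
pose A := [set s | E s z].
have cA : closed A by exact: class_closed.
have nZ := compact_normal hZ cZ.
have sA : set_nbhs A (~` P1).
  move=> x Ax; apply: open_nbhs_nbhs; split; first exact: closed_openC.
  case=> t [Etw Fxt]; apply: nF; exact: (sF x z t w Ax Etw Fxt).
have [C sC clC] := nZ A cA _ sA.
pose Ci := C°.
have ACi : forall x, A x -> Ci x by move=> x Ax; exact: sC.
pose U := ~` [set s | exists t, E s t /\ (~` Ci) t].
have cCi : closed (~` Ci) by apply: open_closedC; exact: open_interior.
pose V := ~` [set t | exists s, closure C s /\ F (s, t)].
have cV : closed [set t | exists s, closure C s /\ F (s, t)].
  have := @proj_closed Z Z [set p | closure C p.2 /\ F (p.2, p.1)] cZ; apply.
  apply: (@closedI _ [set p : Z * Z | closure C p.2] [set p | F (p.2, p.1)]).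
    exact: (@closed_snd Z Z _ (@closed_closure _ C)).
  exact: (@closed_swap Z Z F cF).
have UCi : forall s, U s -> Ci s.
  by move=> s Us; apply: contra_notP Us => nCs; exists s.
exists U, V; split; [split|split].
- by apply: closed_openC; exact: sat_closed.
- exact: closed_openC.
- case=> t [Ezt nCt]; apply: nCt; apply: ACi; exact: Es.
- case=> s [Cs Fsw]; apply: (clC s Cs); exists w; split => //.
- move=> s s' Ess' Us [t [Es't nCt]]; apply: Us; exists t; split => //.
  exact: Et Ess' Es't.
- move=> t t' Ett' Vt [s [Cs Fst']]; apply: Vt; exists s; split => //.
  exact: (sF s s t' t (Er s) (Es Ett') Fst').
- move=> s t Us Vt Fst; apply: Vt; exists s; split => //.
  apply: subset_closure; exact: interior_subset (UCi _ Us).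
Qed.

End Key.


Section Ineq.
Context {R : realType}.

Lemma inf_ge0 (S : set (\bar R)) : (forall s, S s -> 0 <= s) -> 0 <= ereal_inf S.
Proof. by move=> h; apply/ereal_infP. Qed.

Lemma infadd (S : set (\bar R)) (y c : \bar R) :
  (forall s, S s -> 0 <= s) -> 0 <= y -> (forall s, S s -> c <= s + y) ->
  c <= ereal_inf S + y.
Proof.
move=> hS; case: y => [r| |] // hy h.
- rewrite -leeBlDr //; apply/ereal_infP => s Ss; rewrite leeBlDr //; exact: h.
- rewrite addey ?leey //; apply: contraTneq (inf_ge0 hS) => ->; by rewrite leeNy_eq.
Qed.

Lemma inf2 (S T : set (\bar R)) (c : \bar R) :
  (forall s, S s -> 0 <= s) -> (forall t, T t -> 0 <= t) ->
  (forall s t, S s -> T t -> c <= s + t) -> c <= ereal_inf S + ereal_inf T.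
Proof.
move=> hS hT h; apply: infadd => //; first exact: inf_ge0.
move=> s Ss; rewrite addeC; apply: infadd => //; first exact: hS.
by move=> t Tt; rewrite addeC; exact: h.
Qed.

Lemma minR (c t p q : \bar R) : c <= t + p -> c <= t + q -> c <= t + Order.min p q.
Proof. by rewrite /Order.min; case: ifP. Qed.

Lemma minL (c t p q : \bar R) : c <= p + t -> c <= q + t -> c <= Order.min p q + t.
Proof. by rewrite /Order.min; case: ifP. Qed.

Lemma leD_l (x a b y : \bar R) : x <= a + y -> y <= b -> x <= a + b.
Proof. by move=> h1 h2; apply: (le_trans h1); apply: leeD. Qed.

Lemma leD_r (x a b y : \bar R) : x <= y + b -> y <= a -> x <= a + b.
Proof. by move=> h1 h2; apply: (le_trans h1); apply: leeD. Qed.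

End Ineq.

Section GlueMetric.
Context {R : realType} {A B X : Type}.
Variables (dB : B -> B -> \bar R) (dX : X -> X -> \bar R) (i : A -> X) (f : A -> B).
Hypotheses (pB : forall x y, 0 <= dB x y) (zB : forall x, dB x x = 0)
  (tB : forall x y z, dB x z <= dB x y + dB y z)
  (pX : forall x y, 0 <= dX x y) (zX : forall x, dX x x = 0)
  (tX : forall x y z, dX x z <= dX x y + dX y z)
  (hfi : forall a a', dB (f a) (f a') <= dX (i a) (i a')).

Local Notation g := (glue_dist dB dX i f).

Lemma lbi {T : Type} (F : T -> \bar R) t : ereal_inf (range F) <= F t.
Proof. by apply: ereal_inf_lbound; exists t. Qed.

Lemma rng_ge0 {T : Type} (F : T -> \bar R) : (forall t, 0 <= F t) ->
  forall s, range F s -> 0 <= s.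
Proof. by move=> h _ [t _ <-]. Qed.

Let p3 (a b c : \bar R) : 0 <= a -> 0 <= b -> 0 <= c -> 0 <= a + b + c.
Proof. by move=> ha hb hc; rewrite !adde_ge0. Qed.

Lemma glue_ge0 z w : 0 <= g z w.
Proof.
case: z => [b|x]; case: w => [b'|x'] //=.
- by apply: inf_ge0; apply: rng_ge0 => a /=; apply: adde_ge0.
- by apply: inf_ge0; apply: rng_ge0 => a /=; apply: adde_ge0.
- rewrite le_min pX /=; apply: inf_ge0; apply: rng_ge0 => a /=; exact: p3.
Qed.

Lemma glue_refl z : g z z = 0.
Proof.
case: z => [b|x] //=; rewrite zX; apply/eqP; rewrite eq_le ge_min lexx /= le_min lexx /=.
by apply: inf_ge0; apply: rng_ge0 => a /=; exact: p3.
Qed.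

Lemma glue_le_sum z w : g z w <= sum_dist dB dX z w.
Proof.
case: z => [b|x]; case: w => [b'|x'] //=; rewrite ?leey //.
by rewrite ge_min lexx.
Qed.

Lemma nnBX b x : forall s, range (fun a => dB b (f a) + dX (i a) x) s -> 0 <= s.
Proof. by apply: rng_ge0 => a /=; apply: adde_ge0. Qed.
Lemma nnXB x b : forall s, range (fun a => dX x (i a) + dB (f a) b) s -> 0 <= s.
Proof. by apply: rng_ge0 => a /=; apply: adde_ge0. Qed.
Lemma nnII x x' : forall s, range (fun p : A * A =>
  dX x (i p.1) + dB (f p.1) (f p.2) + dX (i p.2) x') s -> 0 <= s.
Proof. by apply: rng_ge0 => a /=; apply: p3. Qed.

Let hfX a x a' : dB (f a) (f a') <= dX (i a) x + dX x (i a').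
Proof. exact: le_trans (hfi a a') (tX _ _ _). Qed.

Lemma glue_tri z y w : g z w <= g z y + g y w.
Proof.
case: z => [b|x]; case: y => [b1|x1]; case: w => [b2|x2] /=.
- exact: tB.
- rewrite addeC; apply: infadd; [exact: nnBX|exact: pB|] => _ [a _ <-] /=.
  apply: (le_trans (lbi _ a)) => /=.
  rewrite addeAC; apply: leeD => //; rewrite addeC; exact: tB.
- apply: inf2; [exact: nnBX|exact: nnXB|] => _ _ [a _ <-] [a' _ <-] /=.
  rewrite -!addeA; apply: (leD_l (tB b (f a) b2)).
  rewrite addeA; apply: (leD_r (tB (f a) (f a') b2)); exact: hfX.
- apply: minR.
    apply: infadd; [exact: nnBX|exact: pX|] => _ [a _ <-] /=.
    apply: (le_trans (lbi _ a)) => /=; rewrite -addeA; exact: leeD.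
  apply: inf2; [exact: nnBX|exact: nnII|] => _ _ [a _ <-] [[a1 a2] _ <-] /=.
  apply: (le_trans (lbi _ a2)) => /=; rewrite addeA; apply: leeD => //.
  rewrite -!addeA; apply: (leD_l (tB b (f a) (f a2))).
  rewrite addeA; apply: (leD_r (tB (f a) (f a1) (f a2))); exact: hfX.
- apply: infadd; [exact: nnXB|exact: pB|] => _ [a _ <-] /=.
  apply: (le_trans (lbi _ a)) => /=; rewrite -addeA; exact: leeD.
- rewrite ge_min; apply/orP; right.
  apply: inf2; [exact: nnXB|exact: nnBX|] => _ _ [a _ <-] [a' _ <-] /=.
  apply: (le_trans (lbi _ (a, a'))) => /=.
  rewrite addeA; apply: leeD => //; rewrite -addeA; exact: leeD.
- apply: minL.
    rewrite addeC; apply: infadd; [exact: nnXB|exact: pX|] => _ [a _ <-] /=.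
    apply: (le_trans (lbi _ a)) => /=.
    rewrite addeAC; apply: leeD => //; rewrite addeC; exact: tX.
  apply: inf2; [exact: nnII|exact: nnXB|] => _ _ [[a1 a2] _ <-] [a _ <-] /=.
  apply: (le_trans (lbi _ a1)) => /=; rewrite -!addeA; apply: leeD => //.
  apply: (leD_l (tB (f a1) (f a2) b2)).
  rewrite addeA; apply: (leD_r (tB (f a2) (f a) b2)); exact: hfX.
- apply: minR; apply: minL.
  + by apply: (le_trans _ (tX x x1 x2)); rewrite ge_min lexx.
  + rewrite ge_min; apply/orP; right.
    apply: infadd; [exact: nnII|exact: pX|] => _ [[a1 a2] _ <-] /=.
    apply: (le_trans (lbi _ (a1, a2))) => /=.
    rewrite -[X in _ <= X]addeA.
    apply: leeD => //; exact: tX.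
  + rewrite addeC ge_min; apply/orP; right.
    apply: infadd; [exact: nnII|exact: pX|] => _ [[a1 a2] _ <-] /=.
    apply: (le_trans (lbi _ (a1, a2))) => /=.
    rewrite [X in _ <= X]addeC !addeA; apply: leeD => //; apply: leeD => //.
  + rewrite ge_min; apply/orP; right.
    apply: inf2; [exact: nnII|exact: nnII|] => _ _ [[a1 a2] _ <-] [[a3 a4] _ <-] /=.
    apply: (le_trans (lbi _ (a1, a4))) => /=.
    rewrite !addeA; apply: leeD => //; rewrite -!addeA; apply: leeD => //.
    apply: (leD_l (tB (f a1) (f a2) (f a4))).
    rewrite addeA; apply: (leD_r (tB (f a2) (f a3) (f a4))); exact: hfX.
Qed.

Lemma glue_metric : is_metric g.
Proof. by split; [exact: glue_ge0|exact: glue_refl|exact: glue_tri]. Qed.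

End GlueMetric.


Lemma cont_comp {S T U : topologicalType} (p : S -> T) (q : T -> U) :
  continuous p -> continuous q -> continuous (q \o p).
Proof. by move=> cp cq x; apply: continuous_comp; [exact: cp|exact: cq]. Qed.

Section SumTop.
Context {B X : topologicalType}.

Lemma sum_openE (U : set (sumT B X)) :
  open U <-> open (@inl B X @^-1` U) /\ open (@inr B X @^-1` U).
Proof. by []. Qed.

Lemma inl_open (U : set B) : open U -> open (@inl B X @` U : set (sumT B X)).
Proof.
move=> oU; apply/sum_openE; split.
  have -> : @inl B X @^-1` (@inl B X @` U) = U.
    by apply/funext => b; apply/propext; split; [case=> b' Ub' [<-]|exists b].
  exact: oU.
have -> : @inr B X @^-1` (@inl B X @` U) = set0.
  by apply/funext => x; apply/propext; split => //; case.
exact: open0.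
Qed.

Lemma inr_open (U : set X) : open U -> open (@inr B X @` U : set (sumT B X)).
Proof.
move=> oU; apply/sum_openE; split.
  have -> : @inl B X @^-1` (@inr B X @` U) = set0.
    by apply/funext => x; apply/propext; split => //; case.
  exact: open0.
have -> : @inr B X @^-1` (@inr B X @` U) = U.
  by apply/funext => b; apply/propext; split; [case=> b' Ub' [<-]|exists b].
exact: oU.
Qed.

Lemma nbhs_inl (b : B) (U : set B) : nbhs b U -> nbhs (inl b : sumT B X) (inl @` U).
Proof.
rewrite !nbhsE; move=> [W [oO Ob] OU]; exists (inl @` W).
  by split; first exact: inl_open; exists b.
by move=> _ [b' Ob' <-]; exists b' => //; exact: OU.
Qed.

Lemma nbhs_inr (x : X) (U : set X) : nbhs x U -> nbhs (inr x : sumT B X) (inr @` U).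
Proof.
rewrite !nbhsE; move=> [W [oO Ob] OU]; exists (inr @` W).
  by split; first exact: inr_open; exists x.
by move=> _ [b' Ob' <-]; exists b' => //; exact: OU.
Qed.

Lemma inl_cont : continuous (@inl B X : B -> sumT B X).
Proof. by apply/continuousP => U /sum_openE []. Qed.

Lemma inr_cont : continuous (@inr B X : X -> sumT B X).
Proof. by apply/continuousP => U /sum_openE []. Qed.

Lemma sum_compact : compact [set: B] -> compact [set: X] -> compact [set: sumT B X].
Proof.
move=> cB cX.
have -> : [set: sumT B X] = (@inl B X @` setT) `|` (@inr B X @` setT).
  apply/funext => -[b|x]; apply/propext; split => // _; [left|right]; by eexists.
apply: compactU; apply: continuous_compact => //; apply: continuous_subspaceT.
  exact: inl_cont.
exact: inr_cont.
Qed.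

Lemma sum_hausdorff : hausdorff_space B -> hausdorff_space X ->
  hausdorff_space (sumT B X).
Proof.
rewrite !open_hausdorff; move=> hB hX [b|x] [b'|x'] neq.
- have /hB [[U V] /= [Ub Vb] [oU oV UV]] : b != b'.
    by apply: contraNneq neq => ->.
  exists (inl @` U, inl @` V) => /=.
    split; apply/mem_set; [exists b|exists b'] => //; exact/set_mem.
  split; [exact: inl_open|exact: inl_open|].
  apply/eqP/funext => z; apply/propext; split => //.
  move=> [[b1 Ub1 eb1] [b2 Vb2 eb2]]; subst z; case: eb2 => eb; subst b2.
  have : (U `&` V) b1 by [].
  by rewrite (eqP UV).
- exists (@inl B X @` setT, @inr B X @` setT) => /=.
    by split; apply/mem_set; eexists.
  split; [exact: inl_open openT|exact: inr_open openT|].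
  by apply/eqP/funext => z; apply/propext; split => // -[[? _ <-] [? _]].
- exists (@inr B X @` setT, @inl B X @` setT) => /=.
    by split; apply/mem_set; eexists.
  split; [exact: inr_open openT|exact: inl_open openT|].
  by apply/eqP/funext => z; apply/propext; split => // -[[? _ <-] [? _]].
- have /hX [[U V] /= [Ub Vb] [oU oV UV]] : x != x'.
    by apply: contraNneq neq => ->.
  exists (inr @` U, inr @` V) => /=.
    split; apply/mem_set; [exists x|exists x'] => //; exact/set_mem.
  split; [exact: inr_open|exact: inr_open|].
  apply/eqP/funext => z; apply/propext; split => //.
  move=> [[b1 Ub1 eb1] [b2 Vb2 eb2]]; subst z; case: eb2 => eb; subst b2.
  have : (U `&` V) b1 by [].
  by rewrite (eqP UV).
Qed.

End SumTop.

Section GlueLsc.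
Context {R : realType} {A B X : topologicalType}.
Variables (dB : B -> B -> \bar R) (dX : X -> X -> \bar R) (i : A -> X) (f : A -> B).
Hypotheses (pB : forall x y, 0 <= dB x y) (pX : forall x y, 0 <= dX x y)
  (uB : upper_continuous dB) (uX : upper_continuous dX)
  (ci : continuous i) (cf : continuous f) (cA : compact [set: A]).

Lemma lsc_case {Y1 Y2 : topologicalType} (p1 : Y1 -> sumT B X) (p2 : Y2 -> sumT B X)
  (G : Y1 -> Y2 -> \bar R) (gam : sumT B X -> sumT B X -> \bar R) :
  (forall y U, nbhs y U -> nbhs (p1 y) (p1 @` U)) ->
  (forall y U, nbhs y U -> nbhs (p2 y) (p2 @` U)) ->
  (forall y1 y2, gam (p1 y1) (p2 y2) = G y1 y2) ->
  lscN (fun q : Y1 * Y2 => G q.1 q.2) ->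
  forall y1 y2 u, u < gam (p1 y1) (p2 y2) ->
  nbhs (p1 y1, p2 y2) [set q | u < gam q.1 q.2].
Proof.
move=> n1 n2 eG lG y1 y2 u; rewrite eG => h.
have /nbhs_box [U [V [nU nV sub]]] := lG (y1, y2) u h.
apply/nbhs_box; exists (p1 @` U), (p2 @` V); split; [exact: n1|exact: n2|].
move=> [z w] [[y1' U1 e1] [y2' V2 e2]]; move: e1 e2 => /= e1 e2; subst z w; rewrite eG.
exact: (sub (y1', y2')).
Qed.

Let c1 {S T : topologicalType} : continuous (fun p : S * T => p.1). Proof. exact: fst_cont. Qed.
Let c2 {S T : topologicalType} : continuous (fun p : S * T => p.2). Proof. exact: snd_cont. Qed.

Lemma lsc_BX : lscN (fun q : B * X =>
  ereal_inf (range (fun a => dB q.1 (f a) + dX (i a) q.2))).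
Proof.
apply: (@lscN_inf _ (B * X)%type A (fun q a => dB q.1 (f a) + dX (i a) q.2)) => //.
apply: lscN_add => [p|p||]; [exact: pB|exact: pX| |].
  apply: (@lscN_comp2 _ B _ dB (fun p : (B * X) * A => p.1.1) (fun p => f p.2)).
  - by apply/uc_lscN.
  - exact: (cont_comp c1 c1).
  - exact: (cont_comp c2 cf).
apply: (@lscN_comp2 _ X _ dX (fun p : (B * X) * A => i p.2) (fun p => p.1.2)).
- by apply/uc_lscN.
- exact: (cont_comp c2 ci).
- exact: (cont_comp c1 c2).
Qed.

Lemma lsc_XB : lscN (fun q : X * B =>
  ereal_inf (range (fun a => dX q.1 (i a) + dB (f a) q.2))).
Proof.
apply: (@lscN_inf _ (X * B)%type A (fun q a => dX q.1 (i a) + dB (f a) q.2)) => //.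
apply: lscN_add => [p|p||]; [exact: pX|exact: pB| |].
  apply: (@lscN_comp2 _ X _ dX (fun p : (X * B) * A => p.1.1) (fun p => i p.2)).
  - by apply/uc_lscN.
  - exact: (cont_comp c1 c1).
  - exact: (cont_comp c2 ci).
apply: (@lscN_comp2 _ B _ dB (fun p : (X * B) * A => f p.2) (fun p => p.1.2)).
- by apply/uc_lscN.
- exact: (cont_comp c2 cf).
- exact: (cont_comp c1 c2).
Qed.

Lemma lsc_XX : lscN (fun q : X * X => Order.min (dX q.1 q.2)
  (ereal_inf (range (fun p : A * A =>
     dX q.1 (i p.1) + dB (f p.1) (f p.2) + dX (i p.2) q.2)))).
Proof.
apply: lscN_min; first by apply/uc_lscN.
have cAA : compact [set: A * A] by rewrite -setXTT; exact: compact_setX.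
apply: (@lscN_inf _ (X * X)%type (A * A)%type (fun q p =>
     dX q.1 (i p.1) + dB (f p.1) (f p.2) + dX (i p.2) q.2)) => //.
apply: lscN_add => [p|p||]; [by rewrite adde_ge0|exact: pX| |]; last first.
  apply: (@lscN_comp2 _ X _ dX (fun p : (X * X) * (A * A) => i p.2.2) (fun p => p.1.2)).
  - by apply/uc_lscN.
  - exact: (cont_comp (cont_comp c2 c2) ci).
  - exact: (cont_comp c1 c2).
apply: lscN_add => [p|p||]; [exact: pX|exact: pB| |].
  apply: (@lscN_comp2 _ X _ dX (fun p : (X * X) * (A * A) => p.1.1) (fun p => i p.2.1)).
  - by apply/uc_lscN.
  - exact: (cont_comp c1 c1).
  - exact: (cont_comp (cont_comp c2 c1) ci).
apply: (@lscN_comp2 _ B _ dB (fun p : (X * X) * (A * A) => f p.2.1) (fun p => f p.2.2)).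
- by apply/uc_lscN.
- exact: (cont_comp (cont_comp c2 c1) cf).
- exact: (cont_comp (cont_comp c2 c2) cf).
Qed.

Lemma glue_uc : upper_continuous (glue_dist dB dX i f).
Proof.
apply/uc_lscN => -[z w] u; case: z => [b|x]; case: w => [b'|x'] => h.
- exact: (@lsc_case B B inl inl (fun b b' => dB b b') _ (@nbhs_inl B X) (@nbhs_inl B X)
    (fun _ _ => erefl) (proj1 (uc_lscN dB) uB) b b' u h).
- exact: (@lsc_case B X inl inr _ _ (@nbhs_inl B X) (@nbhs_inr B X)
    (fun _ _ => erefl) lsc_BX b x' u h).
- exact: (@lsc_case X B inr inl _ _ (@nbhs_inr B X) (@nbhs_inl B X)
    (fun _ _ => erefl) lsc_XB x b' u h).
- exact: (@lsc_case X X inr inr _ _ (@nbhs_inr B X) (@nbhs_inr B X)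
    (fun _ _ => erefl) lsc_XX x x' u h).
Qed.

End GlueLsc.


Section Q.
Local Open Scope quotient_scope.
Context {R : realType} {Z : topologicalType} (gamma : Z -> Z -> \bar R) (H : is_metric gamma).
Hypotheses (cZ : compact [set: Z]) (hZ : hausdorff_space Z) (ug : upper_continuous gamma).

Local Notation pr := (gquot_proj H).
Local Notation E := (fun s t => gamma s t = 0 /\ gamma t s = 0).

Lemma proj_eqP s t : pr s = pr t <-> E s t.
Proof.
split => h.
- by have /asboolP := introT (@eqquotP _ _ {eq_quot gamma_equiv H} s t) h.
- by apply: (elimT (@eqquotP _ _ {eq_quot gamma_equiv H} s t)); apply/asboolP.
Qed.

Lemma repr_proj z : E (repr (pr z)) z.
Proof. by apply/proj_eqP; rewrite /gquot_proj reprK. Qed.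

Lemma gq_open (U : set (gquot H)) : open U <-> open (pr @^-1` U).
Proof. by []. Qed.

Let g0 s t : 0 <= gamma s t. Proof. by case: H. Qed.
Let gr s : gamma s s = 0. Proof. by case: H. Qed.
Let gt s t r : gamma s r <= gamma s t + gamma t r. Proof. by case: H. Qed.

Lemma Er s : E s s. Proof. by split; apply: gr. Qed.
Lemma Es s t : E s t -> E t s. Proof. by case. Qed.
Lemma Et s t r : E s t -> E t r -> E s r.
Proof.
move=> [h1 h2] [h3 h4]; split; apply/eqP; rewrite eq_le g0 andbT.
- by have := gt s t r; rewrite h1 h3 adde0.
- by have := gt r t s; rewrite h4 h2 adde0.
Qed.

Lemma ginv s s' t t' : E s s' -> E t t' -> gamma s t = gamma s' t'.
Proof.
move=> [h1 h2] [h3 h4]; apply/eqP; rewrite eq_le; apply/andP; split.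
- apply: (le_trans (gt s s' t)); rewrite h1 add0e.
  by apply: (le_trans (gt s' t' t)); rewrite h4 adde0.
- apply: (le_trans (gt s' s t')); rewrite h2 add0e.
  by apply: (le_trans (gt s t t')); rewrite h3 adde0.
Qed.

Lemma closed_le u : closed [set p : Z * Z | gamma p.1 p.2 <= u].
Proof.
have -> : [set p : Z * Z | gamma p.1 p.2 <= u] = ~` [set p | u < gamma p.1 p.2].
  by apply/funext => p; apply/propext; rewrite /= leNgt; split => [/negP|/negP].
exact: open_closedC.
Qed.

Lemma closedE : closed [set p : Z * Z | E p.1 p.2].
Proof.
have -> : [set p : Z * Z | E p.1 p.2] =
  [set p | gamma p.1 p.2 <= 0] `&` [set p | gamma (p.2, p.1).1 (p.2, p.1).2 <= 0].
  apply/funext => p; apply/propext; split => /=.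
    by case=> -> ->.
  by case=> h1 h2; split; apply/eqP; rewrite eq_le g0 andbT.
apply: closedI; first exact: closed_le.
exact: (closed_swap (closed_le (u:=0))).
Qed.

Lemma sat_pre (U : set Z) : (forall s s', E s s' -> U s -> U s') ->
  pr @^-1` (pr @` U) = U.
Proof.
move=> sU; apply/funext => s; apply/propext; split; last by move=> Us; exists s.
by case=> t Ut /proj_eqP Ets; exact: sU Ut.
Qed.

Lemma open_img (U : set Z) : open U -> (forall s s', E s s' -> U s -> U s') ->
  open (pr @` U : set (gquot H)).
Proof. by move=> oU sU; apply/gq_open; rewrite sat_pre. Qed.

Lemma gq_compact : compact [set: gquot H].
Proof.
have -> : [set: gquot H] = pr @` setT.
  apply/funext => q; apply/propext; split => // _; exists (repr q) => //.
  by rewrite /gquot_proj reprK.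
apply: continuous_compact => //; apply: continuous_subspaceT.
exact: pi_continuous.
Qed.

Let keyE := key cZ hZ Er Es Et closedE.

Lemma gq_hausdorff : hausdorff_space (gquot H).
Proof.
rewrite open_hausdorff => q q' neq.
have nE : ~ E (repr q) (repr q').
  move=> /proj_eqP; rewrite /gquot_proj !reprK => e; by rewrite e eqxx in neq.
have [U [V [[oU oV Uz Vw] [sU sV dUV]]]] :=
  @keyE [set p | E p.1 p.2] (repr q) (repr q') closedE
    (fun s s' t t' ess' ett' est => Et (Et (Es ess') est) ett') nE.
exists (pr @` U, pr @` V) => /=.
  split; apply/mem_set; [exists (repr q)|exists (repr q')] => //;
  by rewrite /gquot_proj reprK.
split; [exact: open_img|exact: open_img|].
apply/eqP/funext => p; apply/propext; split => //.
move=> [[s Us es] [t Vt et]]; rewrite -et in es.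
by apply: (dUV s t Us Vt); apply/proj_eqP.
Qed.

Lemma gq_metric : is_metric (gquot_dist H).
Proof. by split => *; rewrite /gquot_dist. Qed.

Lemma gq_sep : is_separated (gquot_dist H).
Proof.
move=> q q' h1 h2.
have : pr (repr q) = pr (repr q') by apply/proj_eqP.
by rewrite /gquot_proj !reprK.
Qed.

Lemma gq_uc : upper_continuous (gquot_dist H).
Proof.
move=> u; rewrite openE => -[q q'] /= h.
have sF : forall s s' t t', E s s' -> E t t' ->
    [set p | gamma p.1 p.2 <= u] (s, t) -> [set p | gamma p.1 p.2 <= u] (s', t').
  by move=> s s' t t' ess' ett' /=; rewrite (ginv ess' ett').
have nF : ~ [set p | gamma p.1 p.2 <= u] (repr q, repr q').
  by rewrite /= leNgt h.
have [U [V [[oU oV Uz Vw] [sU sV dUV]]]] :=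
  @keyE [set p | gamma p.1 p.2 <= u] (repr q) (repr q') (closed_le (u:=u)) sF nF.
apply/nbhs_box; exists (pr @` U), (pr @` V); split.
- apply: open_nbhs_nbhs; split; first exact: open_img.
  by exists (repr q) => //; rewrite /gquot_proj reprK.
- apply: open_nbhs_nbhs; split; first exact: open_img.
  by exists (repr q') => //; rewrite /gquot_proj reprK.
- move=> [p p'] [[s Us e1] [t Vt e2]]; move: e1 e2 => /= e1 e2; subst p p'.
  rewrite /gquot_dist.
  rewrite ltNge; apply/negP => hle; apply: (dUV _ _ _ _ hle).
  + exact: sU (Es (repr_proj s)) Us.
  + exact: sV (Es (repr_proj t)) Vt.
Qed.

Lemma gq_MetCH : MetCH_sep (gquot_dist H).
Proof.
split; [exact: gq_compact|exact: gq_hausdorff|exact: gq_metric|exact: gq_sep|exact: gq_uc].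
Qed.

End Q.


Unset Implicit Arguments.

Theorem proposition4p1 (R : realType) (A B X : topologicalType)
  (dA : A -> A -> \bar R) (dB : B -> B -> \bar R) (dX : X -> X -> \bar R)
  (i : A -> X) (f : A -> B) :
  MetCH_sep dA -> MetCH_sep dB -> MetCH_sep dX ->
  is_embedding dA dX i -> is_morphism dA dB f ->
  is_submetric (sum_dist dB dX) (glue_dist dB dX i f) /\
  forall H : is_metric (glue_dist dB dX i f),
    is_pushout dA dB dX (gquot_dist H) f i
      (gquot_proj H \o (@inl B X : B -> sumT B X))
      (gquot_proj H \o (@inr B X : X -> sumT B X)).
Proof.
move=> [cA hA mA sA uA] [cB hB [pB zB tB] sB uB] [cX hX [pX zX tX] sX uX].
move=> [ii [ci _] ei] [cf fA].
have hfi : forall a a', dB (f a) (f a') <= dX (i a) (i a').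
  by move=> a a'; rewrite ei.
set g := glue_dist dB dX i f.
have ug : upper_continuous g by exact: glue_uc.
split.
  split; [exact: glue_metric|exact: ug|exact: glue_le_sum].
move=> H.
have cZ : compact [set: sumT B X] by exact: sum_compact.
have hZ : hausdorff_space (sumT B X) by exact: sum_hausdorff.
pose pr := gquot_proj H.
have prr : forall z, pr (repr (pr z)) = pr z by move=> z; rewrite /pr /gquot_proj reprK.
have dist_pr : forall z w, gquot_dist H (pr z) (pr w) = g z w.
  move=> z w; rewrite /gquot_dist; exact: (ginv H (repr_proj H z) (repr_proj H w)).
split.
- exact: gq_MetCH.
- split; first exact: cont_comp inl_cont pi_continuous.
  by move=> b b' /=; rewrite dist_pr.
- split; first exact: cont_comp inr_cont pi_continuous.
  by move=> x x' /=; rewrite dist_pr /g /= ge_min lexx.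
- apply/funext => a /=; apply/proj_eqP => /=.
  split; apply/eqP; rewrite eq_le; apply/andP; split.
  + by apply: le_trans (lbi _ a) _; rewrite /= zB zX adde0.
  + exact: (glue_ge0 i f pB pX (inl (f a)) (inr (i a))).
  + by apply: le_trans (lbi _ a) _; rewrite /= zB zX adde0.
  + exact: (glue_ge0 i f pB pX (inr (i a)) (inl (f a))).
move=> Z' dZ [cZ' hZ' [pZ zZ tZ] sZ uZ] gB hXX [cg mg] [ch mh] egh.
pose k (z : sumT B X) : Z' := match z with inl b => gB b | inr x => hXX x end.
have egh' : forall a, gB (f a) = hXX (i a) by move=> a; exact: (congr1 (fun F => F a) egh).
have kne : forall z w, dZ (k z) (k w) <= g z w.
  case=> [b|x] [b'|x'] /=.
  - exact: mg.
  - apply/ereal_infP => _ [a _ <-] /=.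
    apply: le_trans (tZ _ (gB (f a)) _) _; apply: leeD; first exact: mg.
    by rewrite egh'; exact: mh.
  - apply/ereal_infP => _ [a _ <-] /=.
    apply: le_trans (tZ _ (gB (f a)) _) _; apply: leeD; last exact: mg.
    by rewrite egh'; exact: mh.
  - rewrite le_min mh /=; apply/ereal_infP => _ [[a1 a2] _ <-] /=.
    rewrite -addeA; apply: le_trans (tZ _ (hXX (i a1)) _) _; apply: leeD; first exact: mh.
    apply: le_trans (tZ _ (hXX (i a2)) _) _; apply: leeD; last exact: mh.
    rewrite -!egh'; exact: mg.
have kwd : forall s t, g s t = 0 -> g t s = 0 -> k s = k t.
  move=> s t h1 h2; apply: sZ; apply/eqP; rewrite eq_le pZ andbT.
    by rewrite -h1; exact: kne.
  by rewrite -h2; exact: kne.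
pose u := fun q : gquot H => k (repr q).
have uk : forall z, u (pr z) = k z.
  by move=> z; case: (repr_proj H z) => h1 h2; exact: kwd.
have ck : continuous k.
  apply/continuousP => O oO; apply/sum_openE; split.
    by move/continuousP: cg; apply.
  by move/continuousP: ch; apply.
exists u; split.
  split; [split| |].
  - apply/quotient_continuous.
    have e : u \o pr = k by apply/funext => z; exact: uk.
    by rewrite -e in ck.
  - by move=> q q'; rewrite /gquot_dist; exact: kne.
  - by apply/funext => b /=; rewrite uk.
  - by apply/funext => x /=; rewrite uk.
move=> u' [_ e1 e2]; apply/funext => q.
have -> : q = pr (repr q) by rewrite /pr /gquot_proj reprK.
case: (repr q) => [b|x]; rewrite uk /=.
  by rewrite -e1.
by rewrite -e2.
Qed.
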